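(* Let $G(x)=\sum_{T\in\mathcal T} w(T)$ be the generating function of Smirnov trees, a formal power series in $x_1,x_2,\dots$ with coefficients in $\mathbb Z[\bar\rho,\rho,\bar\lambda,\lambda]$. Then $$G(x)=\sum_{n\ge1}\sum_{w\in\mathcal W_n} s^{\operatorname{asc} w}\,t^{\operatorname{des} w}\,x_w,$$ where $s=\bar\rho\,\bar\lambda\,G(x)+\bar\rho+\bar\lambda$ and $t=\rho\,\lambda\,G(x)+\rho+\lambda$.
   Context: A word $w=w_1\cdots w_n$ over $\mathbb N=\{1,2,\dots\}$ is a Smirnov word of length $n$ if $w_i\ne w_{i+1}$ for $i=1,\dots,n-1$; $\mathcal W_n$ is the set of Smirnov words of length $n$, $x_w=x_{w_1}\cdots x_{w_n}$, $\operatorname{asc} w=|\{i: w_i<w_{i+1}\}|$, $\operatorname{des} w=|\{i:w_i>w_{i+1}\}|$. Trees are labeled rooted binary trees (each child is a left or a right child, at most one of each) with labels in $\mathbb N$ and at least one node. A Smirnov tree is such a tree where: whenever a left child has the same label $i$ as its parent, the parent also has a right child with label $<i$; and whenever a right child has the same label $i$ as its parent, the parent also has a left child with label $>i$. $\mathcal T$ is the set of Smirnov trees. Weights: $\rho,\bar\rho,\lambda,\bar\lambda$ are commuting indeterminates. An edge from a parent with label $a$ to its right child with label $b$ has weight $\bar\rho$ if $a\le b$ and $\rho$ if $a>b$. An edge between a left child with label $a$ and its parent with label $b$ has weight $\bar\lambda$ if $a\le b$ and $\lambda$ if $a>b$. A node with label $a$ has weight $x_a$. The weight $w(T)$ is the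 product of the weights of all edges and nodes of $T$. *)

(* Defs.v *)
From HB Require Import structures.
From mathcomp Require Import all_boot all_order all_algebra.
From mathcomp Require Import mpoly.
Set Implicit Arguments. Unset Strict Implicit. Unset Printing Implicit Defensive.
Import Order.TTheory GRing.Theory.
Local Open Scope ring_scope.

Definition Coef := {mpoly int[4]}.
Definition rhob : Coef := 'X_(0 : 'I_4).
Definition rho  : Coef := 'X_(1 : 'I_4).
Definition lamb : Coef := 'X_(2 : 'I_4).
Definition lam  : Coef := 'X_(3 : 'I_4).

(* Polynomials in the variables x_1..x_N (variable i : 'I_N stands for x_(i+1)),
   with coefficients in Coef.  Labels in {1..N} are represented by 'I_N, with
   the order of N transported via val. *)
Definition Ser (N : nat) := {mpoly Coef[N]}.

(* Labeled binary trees, possibly empty (BLeaf = empty tree); a tree in the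
   paper's sense is a BNode. *)
Inductive btree (T : Type) :=
| BLeaf
| BNode of btree T & T & btree T.
Arguments BLeaf {T}.

Fixpoint bsize T (t : btree T) : nat :=
  match t with BLeaf => 0%N | BNode l _ r => (bsize l + bsize r).+1 end.

Definition broot T (t : btree T) : option T :=
  if t is BNode _ a _ then Some a else None.

Fixpoint smirnov_nodes N (t : btree 'I_N) : bool :=
  match t with
  | BLeaf => true
  | BNode l a r =>
      [&& (if broot l is Some b then
             (val b == val a) ==>
             (if broot r is Some c then (val c < val a)%N else false)
           else true),
          (if broot r is Some b then
             (val b == val a) ==>
             (if broot l is Some c then (val c > val a)%N else false)
           else true),
          smirnov_nodes l & smirnov_nodes r]
  end.

Definition smirnov_tree N (t : btree 'I_N) : bool :=
  (bsize t > 0)%N && smirnov_nodes t.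

Fixpoint tweight N (t : btree 'I_N) : Ser N :=
  match t with
  | BLeaf => 1
  | BNode l a r =>
      'X_a *
      (if l is BNode _ c _ then
         (if (val c <= val a)%N then lamb else lam)%:MP * tweight l else 1) *
      (if r is BNode _ c _ then
         (if (val a <= val c)%N then rhob else rho)%:MP * tweight r else 1)
  end.

(* all trees of height <= d with labels in 'I_N, each listed exactly once *)
Fixpoint trees_upto N (d : nat) : seq (btree 'I_N) :=
  match d with
  | 0 => [:: BLeaf]
  | d'.+1 => BLeaf :: flatten [seq flatten [seq [seq BNode l a r | r <- trees_upto N d']
                                           | a <- enum 'I_N]
                             | l <- trees_upto N d']
  end.

(* G restricted to labels in {1..N} and trees with at most D nodes *)
Definition Gtrunc N D : Ser N :=
  \sum_(t <- trees_upto N D | (bsize t <= D)%N && smirnov_tree t) tweight t.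

Definition trunc N D (p : Ser N) : Ser N :=
  \sum_(m <- msupp p | (mdeg m <= D)%N) p@_m *: 'X_[m].

Definition adjpairs T (w : seq T) := zip w (behead w).
Definition smirnov_word N (w : seq 'I_N) : bool :=
  all (fun p => val p.1 != val p.2) (adjpairs w).
Definition asc N (w : seq 'I_N) : nat :=
  count (fun p => (val p.1 < val p.2)%N) (adjpairs w).
Definition des N (w : seq 'I_N) : nat :=
  count (fun p => (val p.1 > val p.2)%N) (adjpairs w).
Definition xw N (w : seq 'I_N) : Ser N := \prod_(i <- w) 'X_i.

(* Main.v *)
Require Import Defs.
From HB Require Import structures.
From mathcomp Require Import all_boot all_order all_algebra.
From mathcomp Require Import mpoly.
From mathcomp Require Import ring zify.
Set Implicit Arguments. Unset Strict Implicit. Unset Printing Implicit Defensive.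
Import GRing.Theory.
Local Open Scope ring_scope.


Section Low.
Variable N : nat.
Local Notation S := {mpoly Coef[N]}.

Definition low (k : nat) (p : S) :=
  forall m : 'X_{1..N}, (mdeg m < k)%N -> p@_m = 0.

Lemma low0 p : low 0 p. Proof. by []. Qed.
Lemma low_le j k p : (j <= k)%N -> low k p -> low j p.
Proof. by move=> jk h m hm; apply: h; exact: leq_trans hm jk. Qed.
Lemma low_zero k : low k 0. Proof. by move=> m _; rewrite mcoeff0. Qed.
Lemma lowD k p q : low k p -> low k q -> low k (p + q).
Proof. by move=> hp hq m hm; rewrite mcoeffD hp ?hq ?addr0. Qed.
Lemma lowN k p : low k p -> low k (- p).
Proof. by move=> hp m hm; rewrite mcoeffN hp ?oppr0. Qed.
Lemma lowB k p q : low k p -> low k q -> low k (p - q).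
Proof. by move=> hp hq; apply: lowD hp (lowN hq). Qed.
Lemma low_sum k I (r : seq I) (P : pred I) (F : I -> S) :
  (forall i, P i -> low k (F i)) -> low k (\sum_(i <- r | P i) F i).
Proof.
move=> h; elim/big_rec: _ => [|i x Pi hx]; first exact: low_zero.
exact: lowD (h i Pi) hx.
Qed.
Lemma lowM j k p q : low j p -> low k q -> low (j + k) (p * q).
Proof.
move=> hp hq m hm; rewrite mcoeffM big1 // => -[m1 m2] /= /eqP E.
have : (mdeg m1 + mdeg m2 < j + k)%N by rewrite -mdegD -E.
case: (ltnP (mdeg m1) j) => [h1 _|h1 h2]; first by rewrite hp // mul0r.
by rewrite hq ?mulr0 //; lia.
Qed.
Lemma lowMl k c p : low k p -> low k (c * p).
Proof. by move=> hp; have := lowM (@low0 c) hp. Qed.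
Lemma lowMr k c p : low k p -> low k (p * c).
Proof. by move=> hp; rewrite mulrC; apply: lowMl. Qed.
Lemma lowX (i : 'I_N) : low 1 'X_i.
Proof.
move=> m; rewrite ltnS leqn0 mdeg_eq0 => /eqP ->.
by rewrite mcoeffX mnm1_eq0.
Qed.
Lemma lowXn k p n : low k p -> low (k * n) (p ^+ n).
Proof.
move=> hp; elim: n => [|n IH]; first by rewrite muln0; exact: low0.
by rewrite exprS mulnS; apply: lowM.
Qed.
Lemma low_prod (w : seq 'I_N) : low (size w) (\prod_(i <- w) 'X_i).
Proof.
elim: w => [|i w IH]; first exact: low0.
by rewrite big_cons; apply: (lowM (lowX i) IH).
Qed.

Lemma low_cancel k g h : low 1 g -> low k ((1 + g) * h) -> low k h.
Proof.
move=> hg hk; suff: forall j, (j <= k)%N -> low j h by apply.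
elim=> [|j IH] jk; first exact: low0.
have hj := IH (ltnW jk).
have e : h = (1 + g) * h - g * h by ring.
rewrite e; apply: lowB; first exact: low_le hk.
by have := lowM hg hj.
Qed.

Definition tinv (D : nat) (g : S) := \sum_(i < D.+1) (- g) ^+ i.

Lemma inv_spec D g : low 1 g -> low D.+1 ((1 + g) * tinv D g - 1).
Proof.
move=> hg; have := subrX1 (- g) D.+1; rewrite /tinv => e.
have -> : (1 + g) * (\sum_(i < D.+1) (- g) ^+ i) - 1 = - ((- g) ^+ D.+1) .
  by rewrite -[(- g) ^+ _](subrK 1) e; ring.
by apply: lowN; have := lowXn (n:=D.+1) (lowN hg); rewrite mul1n.
Qed.

Lemma mcoeff_trunc D (p : S) m :
  (trunc D p)@_m = if (mdeg m <= D)%N then p@_m else 0.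
Proof.
rewrite /trunc raddf_sum /=.
under eq_bigr => m' _ do rewrite mcoeffZ mcoeffX.
rewrite big_mkcond /=.
case: (boolP (m \in msupp p)) => hm.
  rewrite (bigD1_seq m) ?msupp_uniq //= eqxx mulr1 big1 ?addr0.
    by case: ifP.
  move=> m' /negbTE nm; case: ifP => // _.
  by rewrite (_ : (m' == m) = false) ?mulr0 //; apply/negbTE; rewrite nm.
rewrite (memN_msupp_eq0 hm) if_same big1_seq // => m' /andP [_ hm'].
case: ifP => // _; case: eqP => [e|_]; last by rewrite mulr0.
by move: hm; rewrite -e hm'.
Qed.

Lemma trunc_eq D (p q : S) : low D.+1 (p - q) -> trunc D p = trunc D q.
Proof.
move=> h; apply/mpolyP => m; rewrite !mcoeff_trunc.
case: ifP => // hm; apply/eqP; rewrite -subr_eq0 -mcoeffB; apply/eqP.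
by apply: h; rewrite ltnS.
Qed.


Lemma alg_step D (x G p p' rb r lb l : S) :
  low 1 x -> low 1 G -> low 1 p -> low 1 p' ->
  low D.+1 ((p' - p) - x * ((1 + lb * p + l * (G - p')) * (1 + rb * (G - p') + r * p)
                      + (p' - p) * (lb * r * p + l * rb * (G - p')))) ->
  low D.+1 (((1 + lb * G) * p' * tinv D (l * G + (lb - l) * p')
             - (1 + lb * G) * p * tinv D (l * G + (lb - l) * p))
            - x * (1 + (rb * lb * G + rb + lb) * (G - (1 + lb * G) * p' * tinv D (l * G + (lb - l) * p'))
                   + (r * l * G + r + l) * ((1 + lb * G) * p * tinv D (l * G + (lb - l) * p)))).
Proof.
move=> hx hG hp hp' hH.
set g := l * G + (lb - l) * p; set g' := l * G + (lb - l) * p'.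
set I := tinv D g; set I' := tinv D g'.
have hg : low 1 g by apply: lowD; apply: lowMl.
have hg' : low 1 g' by apply: lowD; apply: lowMl.
have hI := inv_spec (D:=D) hg; have hI' := inv_spec (D:=D) hg'.
set s := rb * lb * G + rb + lb; set t := r * l * G + r + l.
set K := 1 + lb * G.
set E := (X in low _ X).
set d := l + rb + l * rb * G; set e := (lb - l) * (rb - r).
set F0 := x * d + x * e * p.
have hF0 : low 1 F0 by apply: lowD; [apply: lowMr | apply: lowMr; apply: lowMr].
apply: (low_cancel hg); apply: (low_cancel hg'); apply: (low_cancel hF0).
set A := 1 + x * s; set B := - (1 + x * t); set C := - (x * (1 + s * G)).
pose Zf q := (1 + g) * A * K * q + (1 + (l * G + (lb - l) * q)) * B * K * p
             + C * (1 + g) * (1 + (l * G + (lb - l) * q)).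
set H := (X in low _ X) in hH.
have key : (1 + F0) * ((1 + g') * ((1 + g) * E)) =
   (1 + F0) * ((1 + g) * A * K * p' * ((1 + g') * I' - 1)
             + (1 + g') * B * K * p * ((1 + g) * I - 1))
   + (Zf 1 - Zf 0) * H.
  rewrite /Zf /E /H /I /I' /F0 /A /B /C /K /g /g' /s /t /d /e; ring.
rewrite key; apply: lowD; last exact: lowMl.
by apply: lowMl; apply: lowD; apply: lowMl.
Qed.

End Low.


Section Trees.
Variable N : nat.
Local Notation S := {mpoly Coef[N]}.
Local Notation tree := (btree 'I_N).
Local Notation T := (trees_upto N).

Lemma sum_upto_node d (F : tree -> S) :
  \sum_(t <- T d.+1) F t =
  F BLeaf + \sum_(l <- T d) \sum_(a < N) \sum_(r <- T d) F (BNode l a r).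
Proof.
rewrite /= big_cons big_flatten /= big_map; congr (_ + _); apply: eq_bigr => l _.
rewrite big_flatten /= big_map big_enum /=; apply: eq_bigr => a _.
by rewrite big_map.
Qed.

Definition Lf (a : 'I_N) (l : tree) : S :=
  if l is BNode _ c _ then (if (val c <= val a)%N then lamb else lam)%:MP * tweight l else 1.
Definition Rf (a : 'I_N) (r : tree) : S :=
  if r is BNode _ c _ then (if (val a <= val c)%N then rhob else rho)%:MP * tweight r else 1.

Lemma tweightE l a r : tweight (BNode l a r) = 'X_a * Lf a l * Rf a r.
Proof. by []. Qed.

Lemma low_tweight (t : tree) : low (bsize t) (tweight t).
Proof.
elim: t => [|l IHl a r IHr]; first exact: low0.
rewrite tweightE.
have hL : low (bsize l) (Lf a l) by case: l IHl => //= *; apply: lowMl.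
have hR : low (bsize r) (Rf a r) by case: r IHr => //= *; apply: lowMl.
have := lowM (lowM (lowX a) hL) hR; apply: low_le => /=; lia.
Qed.

Lemma low_Lf a l : low (bsize l) (Lf a l).
Proof. case: l => [|l c r] //. apply: lowMl. exact: low_tweight. Qed.
Lemma low_Rf a r : low (bsize r) (Rf a r).
Proof. case: r => [|l c r] //; apply: lowMl; exact: low_tweight. Qed.

Lemma trees_upto_mono d k (P : pred tree) (F : tree -> S) : (k <= d)%N ->
  \sum_(t <- T d.+1 | (bsize t <= k)%N && P t) F t =
  \sum_(t <- T d | (bsize t <= k)%N && P t) F t.
Proof.
elim: d k P F => [|d IH] k P F kd.
  have -> : k = 0%N by lia.
  rewrite big_mkcond sum_upto_node /= big_cons big_nil big1 ?addr0.
    by rewrite big_mkcond big_seq1.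
  by move=> a _; rewrite big_seq1.
rewrite big_mkcond sum_upto_node [in RHS]big_mkcond [in RHS]sum_upto_node; congr (_ + _).
have e1 : forall d', \sum_(l <- T d') \sum_(a < N) \sum_(r <- T d')
    (if (bsize (BNode l a r) <= k)%N && P (BNode l a r) then F (BNode l a r) else 0)
  = \sum_(l <- T d' | (bsize l <= k.-1)%N && true) \sum_(a < N)
       \sum_(r <- T d' | (bsize r <= k.-1)%N && ((bsize (BNode l a r) <= k)%N && P (BNode l a r)))
          F (BNode l a r).
  move=> d'; rewrite [RHS]big_rmcond /=; last first.
    move=> l; rewrite andbT => hl; apply: big1 => a _.
    by apply: big1 => r /andP [_ /andP [h _]]; move: hl h => /=; lia.
  apply: eq_bigr => l _; apply: eq_bigr => a _; rewrite [RHS]big_mkcond; apply: eq_bigr => r _.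
  case E: ((bsize (BNode l a r) <= k)%N && P (BNode l a r)); rewrite ?andbF //.
  rewrite andbT; move/andP: E => [h _].
  by have -> : (bsize r <= k.-1)%N by move: h => /=; lia.
rewrite !e1 IH; last by lia.
apply: eq_bigr => l _; apply: eq_bigr => a _; rewrite IH //; lia.
Qed.


Lemma trees_upto_mono' d k (F : tree -> S) : (k <= d)%N ->
  \sum_(t <- T d.+1 | (bsize t <= k)%N) F t =
  \sum_(t <- T d | (bsize t <= k)%N) F t.
Proof.
move=> kd; have := trees_upto_mono predT F kd.
by under eq_bigl do rewrite andbT; under [in RHS]eq_bigl do rewrite andbT.
Qed.

Definition Gr D (a : 'I_N) : S :=
  \sum_(t <- T D | (bsize t <= D)%N && smirnov_tree t && (broot t == Some a)) tweight t.

Definition okt D (t : tree) := (bsize t <= D)%N && smirnov_nodes t.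
Definition phiC D (Pr : pred 'I_N) (t : tree) : S :=
  if t is BNode _ c _ then (if okt D t && Pr c then tweight t else 0) else 0.
Definition phi0 (t : tree) : S := if t is BLeaf then 1 else 0.

Lemma sum_root D (Pr : pred 'I_N) :
  \sum_(b | Pr b) Gr D b = \sum_(t <- T D) phiC D Pr t.
Proof.
rewrite /Gr; under eq_bigr do rewrite big_mkcond.
rewrite exchange_big /=; apply: eq_bigr => t _.
case: t => [|l c r].
  by rewrite big1 // => b _; rewrite /smirnov_tree /= andbF.
rewrite big_mkcond (bigD1 c) //= eqxx andbT big1 ?addr0.
  by rewrite /phiC /okt; case: (Pr c); rewrite ?andbT ?andbF.
move=> b hb; case: (Pr b) => //.
by rewrite (_ : (Some c == Some b) = false) ?andbF //; apply/negbTE; rewrite eq_sym.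
Qed.

Lemma sum_phi0 D : \sum_(t <- T D) phi0 t = 1.
Proof.
case: D => [|d]; first by rewrite /= big_seq1.
rewrite sum_upto_node /= big1 ?addr0 // => l _.
by rewrite big1 // => a _; rewrite big1.
Qed.


Definition condL (a : 'I_N) (l r : tree) :=
  if broot l is Some b then
    (val b == val a) ==> (if broot r is Some c then (val c < val a)%N else false)
  else true.
Definition condR (a : 'I_N) (l r : tree) :=
  if broot r is Some b then
    (val b == val a) ==> (if broot l is Some c then (val c > val a)%N else false)
  else true.

Lemma smirnov_nodesE l a r : smirnov_nodes (BNode l a r) =
  [&& condL a l r, condR a l r, smirnov_nodes l & smirnov_nodes r].
Proof. by []. Qed.

Definition gt3 (a : 'I_N) (l r : tree) : S :=
  if [&& condL a l r, condR a l r, smirnov_nodes l & smirnov_nodes r]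
  then 'X_a * Lf a l * Rf a r else 0.

Lemma pointwise D (a : 'I_N) (l r : tree) :
  let lb := lamb%:MP : S in let ll := lam%:MP : S in
  let rb := rhob%:MP : S in let rr := rho%:MP : S in
  let lt := phiC D (fun b => (val b < val a)%N) in
  let gt := phiC D (fun b => (val a < val b)%N) in
  let eq := phiC D (fun b => (val b == val a)) in
  (if okt D l && okt D r then gt3 a l r else 0) =
  'X_a * ((phi0 l + lb * lt l + ll * gt l) * (phi0 r + rr * lt r + rb * gt r)
          + (lb * eq l) * (rr * lt r) + (ll * gt l) * (rb * eq r)).
Proof.
move=> lb ll rb rr lt gt eq.
rewrite /lt /gt /eq /phiC /gt3 /okt /phi0 /Lf /Rf /condL /condR.
case: l => [|l1 c l2]; case: r => [|r1 e r2].
- rewrite /=; ring.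
- set w := tweight _; set z := bsize (BNode r1 e r2); set sm := smirnov_nodes (BNode _ _ _).
  rewrite /=.
  case: (ltngtP (val e) (val a)) => _; case: sm; case: (z <= D)%N; rewrite /=; ring.
- set w := tweight _; set z := bsize (BNode l1 c l2); set sm := smirnov_nodes (BNode _ _ _).
  rewrite /=.
  case: (ltngtP (val c) (val a)) => _; case: sm; case: (z <= D)%N; rewrite /=; ring.
- set w1 := tweight (BNode l1 c l2); set z1 := bsize (BNode l1 c l2).
  set s1 := smirnov_nodes (BNode l1 c l2).
  set w2 := tweight (BNode r1 e r2); set z2 := bsize (BNode r1 e r2).
  set s2 := smirnov_nodes (BNode r1 e r2).
  rewrite /=.
  case: (ltngtP (val c) (val a)) => _; case: (ltngtP (val e) (val a)) => _;
  case: s1; case: s2; case: (z1 <= D)%N; case: (z2 <= D)%N; rewrite /=; ring.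
Qed.


Lemma low_gt3 a l r : low (bsize l + bsize r).+1 (gt3 a l r).
Proof.
rewrite /gt3; case: ifP => _; last exact: low_zero.
have := lowM (lowM (lowX a) (@low_Lf a l)) (@low_Rf a r).
by apply: low_le; lia.
Qed.

Lemma dsum_filter (s1 s2 : seq tree) (A B : pred tree) (g : tree -> tree -> S) :
  \sum_(l <- s1) \sum_(r <- s2) (if A l && B r then g l r else 0) =
  \sum_(l <- s1 | A l) \sum_(r <- s2 | B r) g l r.
Proof.
rewrite [RHS]big_mkcond; apply: eq_bigr => l _; case: (A l) => /=.
  by rewrite [RHS]big_mkcond.
by rewrite big1.
Qed.

Lemma dsum_bil (s : seq tree) (X : S) (U1 V1 U2 V2 U3 V3 : tree -> S) :
  \sum_(l <- s) \sum_(r <- s) X * (U1 l * V1 r + U2 l * V2 r + U3 l * V3 r) =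
  X * ((\sum_(l <- s) U1 l) * (\sum_(r <- s) V1 r) + (\sum_(l <- s) U2 l) * (\sum_(r <- s) V2 r)
       + (\sum_(l <- s) U3 l) * (\sum_(r <- s) V3 r)).
Proof.
rewrite !big_distrlr /= -!big_split /= mulr_sumr; apply: eq_bigr => l _.
rewrite -!big_split /= mulr_sumr; apply: eq_bigr => r _; by [].
Qed.

End Trees.


Section Trees2.
Variable N : nat.
Local Notation S := {mpoly Coef[N]}.
Local Notation tree := (btree 'I_N).
Local Notation T := (trees_upto N).

Lemma sum_only (a : 'I_N) (F : 'I_N -> S) :
  (forall b, b != a -> F b = 0) -> \sum_b F b = F a.
Proof. by move=> h; rewrite (bigD1 a) //= big1 ?addr0. Qed.

Lemma tree_rel d (a : 'I_N) :
  let D := d.+1 in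
  let P := \sum_(b | (val b < val a)%N) Gr D b in
  let Q := \sum_(b | (val a < val b)%N) Gr D b in
  let Ga := Gr D a in
  low D.+1 (Ga - 'X_a * ((1 + lamb%:MP * P + lam%:MP * Q) * (1 + rho%:MP * P + rhob%:MP * Q)
                         + lamb%:MP * Ga * (rho%:MP * P) + lam%:MP * Q * (rhob%:MP * Ga))).
Proof.
move=> D P Q Ga.
have eP : P = \sum_(t <- T D) phiC D (fun b => (val b < val a)%N) t by rewrite /P sum_root.
have eQ : Q = \sum_(t <- T D) phiC D (fun b => (val a < val b)%N) t by rewrite /Q sum_root.
have eG : Ga = \sum_(t <- T D) phiC D (fun b => (val b == val a)) t.
  rewrite -sum_root /Ga (big_pred1 a) // => b; exact: val_eqE.
have eR : 'X_a * ((1 + lamb%:MP * P + lam%:MP * Q) * (1 + rho%:MP * P + rhob%:MP * Q)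
                         + lamb%:MP * Ga * (rho%:MP * P) + lam%:MP * Q * (rhob%:MP * Ga))
   = \sum_(l <- T D) \sum_(r <- T D) (if okt D l && okt D r then gt3 a l r else 0).
  under eq_bigr do under eq_bigr do rewrite pointwise.
  rewrite dsum_bil !big_split -!mulr_sumr sum_phi0.
  by rewrite -eP -eQ -eG.
have S1 : Ga = \sum_(l <- T d) \sum_(r <- T d)
                 (if (bsize l + bsize r < D)%N then gt3 a l r else 0).
  rewrite /Ga /Gr big_mkcond sum_upto_node.
  rewrite (_ : smirnov_tree (@BLeaf 'I_N) = false) // andbF andFb add0r.
  apply: eq_bigr => l _; rewrite (@sum_only a).
    apply: eq_bigr => r _; rewrite [broot _]/= eqxx andbT /smirnov_tree [bsize _]/= ltn0Sn andTb.
    rewrite smirnov_nodesE /gt3.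
    case: (bsize l + bsize r < D)%N => //.
  move=> b hb; apply: big1 => r _.
  by rewrite [broot _]/= (_ : (Some b == Some a) = false) ?andbF //; apply/negbTE.
have S2 : low D.+1 (\sum_(l <- T d) \sum_(r <- T d)
                 (if (bsize l + bsize r < D)%N then gt3 a l r else 0)
   - \sum_(l <- T d) \sum_(r <- T d)
                 (if (bsize l <= d)%N && (bsize r <= d)%N then gt3 a l r else 0)).
  rewrite -sumrB; apply: low_sum => l _; rewrite -sumrB; apply: low_sum => r _.
  case: ifP => h1.
    by rewrite (_ : _ && _ = true) ?subrr; [exact: low_zero | apply/andP; split; lia].
  case: ifP => _; rewrite ?subrr ?sub0r; last exact: low_zero.
  by apply: lowN; apply: (low_le _ (@low_gt3 N a l r)); lia.
have S3 : \sum_(l <- T d) \sum_(r <- T d)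
                 (if (bsize l <= d)%N && (bsize r <= d)%N then gt3 a l r else 0)
        = \sum_(l <- T D) \sum_(r <- T D)
                 (if (bsize l <= d)%N && (bsize r <= d)%N then gt3 a l r else 0).
  rewrite !dsum_filter /D trees_upto_mono' //; apply: eq_bigr => l _.
  by rewrite trees_upto_mono'.
have S4 : low D.+1 (\sum_(l <- T D) \sum_(r <- T D)
                 (if (bsize l <= d)%N && (bsize r <= d)%N then gt3 a l r else 0)
   - \sum_(l <- T D) \sum_(r <- T D) (if okt D l && okt D r then gt3 a l r else 0)).
  rewrite -sumrB; apply: low_sum => l _; rewrite -sumrB; apply: low_sum => r _.
  rewrite /okt; case: ifP => h1; case: ifP => h2; rewrite ?subrr ?subr0 ?sub0r;
    try exact: low_zero.
    rewrite /gt3 (_ : [&& _, _, _ & _] = false) ?andbF; first exact: low_zero.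
    apply/negbTE; apply/negP => /and4P [_ _ s1 s2]; move: h2; rewrite s1 s2 !andbT.
    by move/negbT/negP; apply; apply/andP; split; move/andP: h1 => [h h']; lia.
  by apply: lowN; apply: (low_le _ (@low_gt3 N a l r)); move: h1 h2; rewrite /D; lia.
rewrite eR S1; rewrite S3 in S2.
have e : forall A B C : S, A - C = (A - B) + (B - C) by move=> *; ring.
by rewrite (e _ (\sum_(l <- T D) \sum_(r <- T D)
                 (if (bsize l <= d)%N && (bsize r <= d)%N then gt3 a l r else 0))); apply: lowD.
Qed.

End Trees2.


Section Words.
Variable N : nat.
Local Notation S := {mpoly Coef[N]}.
Variables s t : S.

Definition wterm (w : seq 'I_N) : S := s ^+ asc w * t ^+ des w * xw w.

Definition Xn n (a : 'I_N) : S :=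
  \sum_(w : n.-tuple 'I_N | smirnov_word w && (ohead w == Some a)) wterm w.

Lemma sum_only' (a : 'I_N) (F : 'I_N -> S) :
  (forall b, b != a -> F b = 0) -> \sum_b F b = F a.
Proof. by move=> h; rewrite (bigD1 a) //= big1 ?addr0. Qed.

Lemma tuple_cons_sum n (F : n.+1.-tuple 'I_N -> S) :
  \sum_(w : n.+1.-tuple 'I_N) F w = \sum_(x : 'I_N) \sum_(w : n.-tuple 'I_N) F [tuple of x :: w].
Proof.
rewrite pair_big /=.
rewrite (reindex (fun p : 'I_N * n.-tuple 'I_N => [tuple of p.1 :: p.2])) //=.
exists (fun u : n.+1.-tuple 'I_N => (thead u, [tuple of behead u])).
  move=> [x w] _ /=; congr (_, _).
  by apply/eqP; rewrite -val_eqE.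
by move=> u _ /=; rewrite -tuple_eta.
Qed.

Lemma tuple0_sum (F : 0.-tuple 'I_N -> S) : \sum_(w : 0.-tuple 'I_N) F w = F [tuple].
Proof. by rewrite (big_pred1 [tuple]) // => w; apply/esym/eqP/tuple0. Qed.

Lemma low_wterm (w : seq 'I_N) : low (size w) (wterm w).
Proof. exact/lowMl/low_prod. Qed.

Lemma low_Xn n a : low n (Xn n a).
Proof.
apply: low_sum => w _; have := @low_wterm w; by rewrite size_tuple.
Qed.

Lemma Xn1 a : Xn 1 a = 'X_a.
Proof.
rewrite /Xn big_mkcond tuple_cons_sum (@sum_only' a).
  rewrite tuple0_sum /= eqxx /wterm /xw /asc /des /= big_cons big_nil.
  by rewrite !expr0 !mul1r mulr1.
by move=> b hb; rewrite tuple0_sum /= (_ : (Some b == Some a) = false) //; apply/negbTE.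
Qed.

Lemma XnS n a : Xn n.+2 a =
  'X_a * \sum_(b | b != a) (if (val a < val b)%N then s else t) * Xn n.+1 b.
Proof.
rewrite {1}/Xn big_mkcond tuple_cons_sum (@sum_only' a); last first.
  move=> b hb; apply: big1 => w _.
  by rewrite /= (_ : (Some b == Some a) = false) ?andbF //; apply/negbTE.
under eq_bigr => w _ do rewrite [X in X == Some _]/= eqxx andbT.
rewrite tuple_cons_sum mulr_sumr.
rewrite [LHS](bigID (fun b => b != a)) /= [X in _ + X]big1 ?addr0; last first.
  move=> b /=; rewrite negbK => /eqP ->; apply: big1 => w _.
  by rewrite /smirnov_word /adjpairs /= eqxx.
apply: eq_bigr => b hb.
rewrite /Xn [in RHS]big_mkcond tuple_cons_sum (@sum_only' b); last first.
  move=> c hc; rewrite big1 ?mulr0 ?mul0r ?if_same // => w _.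
  by rewrite /= (_ : (Some c == Some b) = false) ?andbF //; apply/negbTE.
under [in RHS]eq_bigr => w _ do rewrite [X in X == Some _]/= eqxx andbT.
rewrite !mulr_sumr; apply: eq_bigr => w _.
rewrite /smirnov_word /wterm /asc /des /xw /adjpairs /=.
rewrite big_cons.
have hv : (val a != val b) by rewrite val_eqE eq_sym.
rewrite hv /=.
case: (ltngtP (val a) (val b)) => h.
- case: (all _ _) => /=; rewrite ?mulr0 // !exprS /=; ring.
- case: (all _ _) => /=; rewrite ?mulr0 // !exprS /=; ring.
- by move: hv; rewrite h eqxx.
Qed.


Definition Xs D a := \sum_(1 <= n < D.+1) Xn n a.

Lemma words_total D :
  \sum_(1 <= n < D.+1) \sum_(w : n.-tuple 'I_N | smirnov_word w) wterm w = \sum_a Xs D a.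
Proof.
rewrite /Xs exchange_big /=; apply: eq_big_nat => n /andP [h1 _].
case: n h1 => // m _.
rewrite /Xn; under [RHS]eq_bigr do rewrite big_mkcond.
rewrite [RHS]exchange_big /= [LHS]big_mkcond; apply: eq_bigr => w _.
case/tupleP: w => x w; rewrite (@sum_only' x).
  by rewrite [X in X == _]/= eqxx andbT.
move=> b hb; case: ifP => // /andP [_ /eqP [e]]; by move: hb; rewrite e eqxx.
Qed.

Lemma word_rel d a :
  low d.+2 (Xs d.+1 a - 'X_a * (1 + \sum_(b | b != a) (if (val a < val b)%N then s else t) * Xs d.+1 b)).
Proof.
pose c (b : 'I_N) := if (val a < val b)%N then s else t.
pose Y b := \sum_(0 <= k < d) Xn k.+1 b.
have e1 : Xs d.+1 a = 'X_a + 'X_a * \sum_(b | b != a) c b * Y b.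
  rewrite /Xs big_ltn // Xn1 big_add1 /= big_add1 /=; congr (_ + _).
  under eq_bigr do rewrite XnS.
  rewrite -mulr_sumr; congr (_ * _); rewrite exchange_big /=; apply: eq_bigr => b _.
  by rewrite /Y mulr_sumr.
have e2 : forall b, Xs d.+1 b = Y b + Xn d.+1 b.
  by move=> b; rewrite /Xs big_add1 /= big_nat_recr.
rewrite e1 [X in _ * (1 + X)](eq_bigr (fun b => c b * (Y b + Xn d.+1 b))); last by move=> b _; rewrite e2.
have e3 : \sum_(b | b != a) c b * (Y b + Xn d.+1 b)
        = \sum_(b | b != a) c b * Y b + \sum_(b | b != a) c b * Xn d.+1 b.
  by rewrite -big_split /=; apply: eq_bigr => b _; rewrite mulrDr.
rewrite e3.
have -> : forall A B C : S, A + A * B - A * (1 + (B + C)) = - (A * C) by move=> *; ring.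
apply: lowN; rewrite (_ : d.+2 = 1 + d.+1)%N //; apply: lowM; first exact: lowX.
by apply: low_sum => b _; apply: lowMl; apply: low_Xn.
Qed.

End Words.


Section Final.
Variable N : nat.
Local Notation S := {mpoly Coef[N]}.

Lemma Gtrunc_split D : Gtrunc N D = \sum_b Gr D b.
Proof.
have := @sum_root N D predT; rewrite /= => ->.
rewrite /Gtrunc big_mkcond; apply: eq_bigr => -[|l c r] _ //.
by rewrite /phiC /okt andbT.
Qed.

Lemma low_Gr D b : low 1 (@Gr N D b).
Proof.
apply: low_sum => t /andP [/andP [_ /andP [h _]] _].
exact: (low_le h (@low_tweight N t)).
Qed.

Lemma tele_lt k (f : nat -> S) : (k <= N)%N ->
  \sum_(b : 'I_N | (val b < k)%N) (f (val b).+1 - f (val b)) = f k - f 0%N.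
Proof.
move=> kN; rewrite -(big_ord_widen _ (fun i => f i.+1 - f i) kN).
by rewrite -(big_mkord xpredT (fun i => f i.+1 - f i)) telescope_sumr.
Qed.

Lemma split_lt (a : 'I_N) (F : 'I_N -> S) :
  \sum_b F b = \sum_(b | (val b < (val a).+1)%N) F b + \sum_(b | (val a < val b)%N) F b.
Proof.
rewrite (bigID (fun b : 'I_N => (val b < (val a).+1)%N)) /=; congr (_ + _).
by apply: eq_bigl => b; rewrite -leqNgt.
Qed.

Lemma tele_gt (a : 'I_N) (f : nat -> S) :
  \sum_(b : 'I_N | (val a < val b)%N) (f (val b).+1 - f (val b)) = f N - f (val a).+1.
Proof.
have h := split_lt a (fun b : 'I_N => f (val b).+1 - f (val b)).
have e1 : \sum_(b : 'I_N) (f (val b).+1 - f (val b)) = f N - f 0%N.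
  by rewrite -(tele_lt f (leqnn N)); apply: eq_bigl => b; rewrite ltn_ord.
rewrite e1 tele_lt // in h.
set X := \sum_(b | _) _ in h *.
have -> : X = (f N - f 0%N) - (f (val a).+1 - f 0%N) by rewrite h; ring.
ring.
exact: ltn_ord.
Qed.

Lemma sumS_pred (a : 'I_N) (F : 'I_N -> S) :
  \sum_(b | (val b < (val a).+1)%N) F b = \sum_(b | (val b < val a)%N) F b + F a.
Proof.
rewrite (bigID (fun b : 'I_N => (val b < val a)%N)) /=; congr (_ + _).
  apply: eq_bigl => b; case: (ltnP (val b) (val a)) => h; rewrite ?andbT ?andbF //.
  by move: h; rewrite /=; lia.
rewrite (big_pred1 a) // => b /=; rewrite -val_eqE /=.
case: (ltngtP b a) => h //=; lia.
Qed.

Lemma split_neq (a : 'I_N) (s t : S) (Y : 'I_N -> S) :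
  \sum_(b | b != a) (if (val a < val b)%N then s else t) * Y b =
  s * \sum_(b | (val a < val b)%N) Y b + t * \sum_(b | (val b < val a)%N) Y b.
Proof.
rewrite !mulr_sumr big_mkcond [X in _ = X + _]big_mkcond [X in _ = _ + X]big_mkcond.
rewrite -big_split /=; apply: eq_bigr => b _.
rewrite -val_eqE /=; case: (ltngtP a b) => h; rewrite /= ?addr0 ?add0r //.
Qed.

Lemma uniq_sys D (x : 'I_N -> S) (s t : S) (Z : 'I_N -> S) :
  (forall a, low 1 (x a)) ->
  (forall a, low D.+1 (Z a - x a * (s * \sum_(b | (val a < val b)%N) Z b
                                   + t * \sum_(b | (val b < val a)%N) Z b))) ->
  forall a, low D.+1 (Z a).
Proof.
move=> hx hZ; suff: forall k, (k <= D.+1)%N -> forall a, low k (Z a) by apply.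
elim=> [|k IH] kD a; first exact: low0.
have e : Z a = (Z a - x a * (s * \sum_(b | (val a < val b)%N) Z b
                                   + t * \sum_(b | (val b < val a)%N) Z b))
               + x a * (s * \sum_(b | (val a < val b)%N) Z b
                                   + t * \sum_(b | (val b < val a)%N) Z b) by ring.
rewrite e; apply: lowD; first exact: (low_le kD (hZ a)).
rewrite (_ : k.+1 = 1 + k)%N //; apply: lowM => //.
apply: lowD; apply: lowMl; apply: low_sum => b _; apply: IH; exact: ltnW.
Qed.

End Final.

Lemma e_gen (R : comRingType) (U V X S0 T0 W Gv : R) :
  (U - V) - X * (1 + S0 * (W - U) + T0 * V)
  = ((U - V) - X * (1 + S0 * (Gv - U) + T0 * V)) + (- (X * S0)) * (W - Gv).
Proof. ring. Qed.

Lemma low_eq N k (p q : {mpoly Coef[N]}) : p = q -> low k p -> low k q.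
Proof. by move=> ->. Qed.

Unset Implicit Arguments.

Theorem mainTheorem2 (N D : nat) :
  let G := Gtrunc N D in
  let s := rhob%:MP * lamb%:MP * G + rhob%:MP + lamb%:MP in
  let t := rho%:MP * lam%:MP * G + rho%:MP + lam%:MP in
  trunc D G =
  trunc D (\sum_(1 <= n < D.+1)
             \sum_(w : n.-tuple 'I_N | smirnov_word w)
                s ^+ asc w * t ^+ des w * xw w).
Proof.
have hG : forall D', Gtrunc N D' = \sum_b Gr D' b by move=> D'; exact: Gtrunc_split.
case: D => [|d] G s t; apply: trunc_eq; have eG : G = Gtrunc N _ := erefl.
  have lG : low 1 G by rewrite eG hG; apply: low_sum => b _; exact: low_Gr.
  by rewrite big_geq // subr0.
have lG : low 1 G by rewrite eG hG; apply: low_sum => b _; exact: low_Gr.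
have hW := words_total s t d.+1.
rewrite [X in G - X](_ : _ = \sum_a Xs s t d.+1 a) //.
pose P k := \sum_(b : 'I_N | (val b < k)%N) Gr d.+1 b.
have lP : forall k, low 1 (P k) by move=> k; apply: low_sum => b _; exact: low_Gr.
have P0 : P 0%N = 0 by rewrite /P big_pred0.
have PN : P N = G by rewrite /P eG hG; apply: eq_bigl => b; rewrite ltn_ord.
have PS : forall a : 'I_N, P (val a).+1 = P (val a) + Gr d.+1 a by move=> a; exact: sumS_pred.
have PQ : forall a : 'I_N, \sum_(b | (val a < val b)%N) Gr d.+1 b = G - P (val a).+1.
  move=> a; rewrite eG hG (split_lt a) /P; ring.
pose lb : {mpoly Coef[N]} := lamb%:MP; pose l : {mpoly Coef[N]} := lam%:MP.
pose rb : {mpoly Coef[N]} := rhob%:MP; pose r : {mpoly Coef[N]} := rho%:MP.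
pose phi u := (1 + lb * G) * u * tinv d.+1 (l * G + (lb - l) * u).
pose ut k := phi (P k).
have hstep : forall a : 'I_N, low d.+2 ((ut (val a).+1 - ut (val a))
     - 'X_a * (1 + s * (G - ut (val a).+1) + t * ut (val a))).
  move=> a; apply: (@alg_step N d.+1 'X_a G (P (val a)) (P (val a).+1) rb r lb l
                      (lowX a) lG (lP _) (lP _)).
  have hT := @tree_rel N d a; rewrite /= in hT.
  change (\sum_(b | (nat_of_ord b < nat_of_ord a)%N) Gr d.+1 b) with (P (val a)) in hT.
  rewrite PQ in hT.
  have eGa : Gr d.+1 a = P (val a).+1 - P (val a) by rewrite PS; ring.
  rewrite eGa in hT; apply: (low_eq _ hT); rewrite /lb /l /rb /r; ring.
have u0 : ut 0%N = 0 by rewrite /ut /phi P0 mulr0 mul0r.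
have uN : low d.+2 (ut N - G).
  rewrite /ut /phi PN.
  have -> : l * G + (lb - l) * G = lb * G by ring.
  have hl : low 1 (lb * G) by apply: lowMl.
  have := inv_spec (D:=d.+1) hl.
  have -> : (1 + lb * G) * G * tinv d.+1 (lb * G) - G = G * ((1 + lb * G) * tinv d.+1 (lb * G) - 1) by ring.
  by apply: lowMl.
clearbody ut; clearbody phi; clearbody s t; clearbody P; clearbody G.
pose Xt (a : 'I_N) := ut (val a).+1 - ut (val a).
have hXt : forall a : 'I_N, low d.+2 (Xt a - 'X_a * (1 + s * \sum_(b | (val a < val b)%N) Xt b
                                              + t * \sum_(b | (val b < val a)%N) Xt b)).
  move=> a; rewrite /Xt tele_gt tele_lt ?u0 ?subr0; last exact: ltnW (ltn_ord a).
  rewrite (e_gen _ _ _ _ _ _ G); apply: lowD; first exact: hstep.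
  exact: lowMl.
have hXs : forall a : 'I_N, low d.+2 (Xs s t d.+1 a - 'X_a * (1 + s * \sum_(b | (val a < val b)%N) Xs s t d.+1 b
                                              + t * \sum_(b | (val b < val a)%N) Xs s t d.+1 b)).
  by move=> a; rewrite -addrA -split_neq; exact: word_rel.
have eXt : \sum_a Xt a = ut N.
  have := tele_lt ut (leqnn N); rewrite u0 subr0 => <-.
  by apply: eq_bigl => b; rewrite ltn_ord.
clearbody Xt.
pose Z a := Xs s t d.+1 a - Xt a.
have sZ : forall Pr : pred 'I_N, \sum_(b | Pr b) Z b =
    \sum_(b | Pr b) Xs s t d.+1 b - \sum_(b | Pr b) Xt b by move=> Pr; rewrite -sumrB.
have hZ := @uniq_sys N d.+1 (fun a => 'X_a) s t Z (fun a => lowX a).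
have lZ : forall a, low d.+2 (Z a).
  apply: hZ => a; rewrite !sZ /Z.
  have := lowB (hXs a) (hXt a); apply: low_eq; ring.
have -> : G - \sum_a Xs s t d.+1 a = - (ut N - G) - \sum_a Z a.
  by rewrite /Z sumrB eXt; ring.
by apply: lowB; [apply: lowN | apply: low_sum => a _].
Qed.
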